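(* In every financial network without default cost (i.e., with $\delta=1$), for any distinct banks $v,w$, there is no positive multi-trade of incoming edges of creditor $v$ to buyer $w$; that is, there is no such multi-trade whose post-trade assets satisfy both $a'_v>a_v$ and $a'_w>a_w$.
   Context: A financial network is $\mathcal{F}=(V,E,\ell,a^x)$: $V$ is a finite set of banks, $E$ a set of directed edges, where $(u,v)\in E$ means debtor $u$ owes creditor $v$ the liability $\ell_{(u,v)}\in\mathbb{N}_{>0}$, and $a^x_b\in\mathbb{N}_{\ge 0}$ are the external assets of bank $b$. $E^+(b)$ and $E^-(b)$ denote the outgoing and incoming edges of $b$, and $L_b=\sum_{e\in E^+(b)}\ell_e$. There is a default-cost parameter $\delta\in[0,1]$. For a payment vector $p=(p_e)_{e\in E}\ge 0$, bank $b$ is solvent if $a^x_b+\sum_{e\in E^-(b)}p_e\ge L_b$, and then its total assets are $a_b=a^x_b+\sum_{e\in E^-(b)}p_e$; otherwise $b$ is in default and $a_b=\delta\,(a^x_b+\sum_{e\in E^-(b)}p_e)$. A fixed point is a vector $p$ with $p_e=\min\{a_b,L_b\}\ell_e/L_b$ for all $b$ and $e\in E^+(b)$. The fixed points form a complete lattice, and the clearing state is its supremum. Assets $a_b$ and recovery rates $r_b=\min\{a_b/L_b,1\}$ always refer to the clearing state. Multi-trade of incoming edges: for distinct banks $v$ (creditor) and $w$ (buyer), let $e_1,\dots,e_k$ be the edges of $E^-(v)\setminus\{(w,v)\}$, with $e_i=(u_i,v)$. Choose fractions $\beta_i\in[0,1]$ and haircut rates $\alpha_i\in[0,1]$, with total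 return $\rho=\sum_i\alpha_i\beta_i\ell_{e_i}\le a^x_w$. In the post-trade network $\mathcal{F}'$, the liability of $e_i$ becomes $(1-\beta_i)\ell_{e_i}$ and $\beta_i\ell_{e_i}$ is added to the liability of edge $(u_i,w)$ (which is created if absent). The external assets of $v$ become $a^x_v+\rho$, those of $w$ become $a^x_w-\rho$, and everything else is unchanged. Post-trade assets $a'_b$ are those in the clearing state of $\mathcal{F}'$, while $a_b$ are those of $\mathcal{F}$. *)

(* Defs.v *)
From HB Require Import structures.
From mathcomp Require Import all_boot all_order all_algebra.
From mathcomp Require Import all_classical all_reals.
Set Implicit Arguments. Unset Strict Implicit. Unset Printing Implicit Defensive.
Import Order.TTheory GRing.Theory Num.Theory.
Local Open Scope ring_scope.

Section FinNet.
Variables (R : realType) (V : finType).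

(* A financial network is given by a liability matrix [l : V -> V -> R]
   ([l u x > 0] iff (u,x) is an edge, debtor u, creditor x; [l u x = 0]
   means no edge) and external assets [ax : V -> R]. *)

Definition total_liab (l : V -> V -> R) (b : V) : R := \sum_(c : V) l b c.

Definition inflow (p : V -> V -> R) (b : V) : R := \sum_(u : V) p u b.

Definition solvent (l : V -> V -> R) (ax : V -> R) (p : V -> V -> R) (b : V) : bool :=
  total_liab l b <= ax b + inflow p b.

Definition assets (delta : R) (l : V -> V -> R) (ax : V -> R)
    (p : V -> V -> R) (b : V) : R :=
  if solvent l ax p b then ax b + inflow p b
  else delta * (ax b + inflow p b).

(* fixed point: p >= 0 and p_(u,x) = min{a_u, L_u} * l_(u,x) / L_u on all edges
   (on non-edges l u x = 0 forces p u x = 0; if L_u = 0 there are no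
   outgoing edges and mathcomp's x/0 = 0 gives p u x = 0). *)
Definition fixed_point (delta : R) (l : V -> V -> R) (ax : V -> R)
    (p : V -> V -> R) : Prop :=
  (forall u x, 0 <= p u x) /\
  (forall u x, p u x = Num.min (assets delta l ax p u) (total_liab l u)
                        * l u x / total_liab l u).

Definition clearing_state (delta : R) (l : V -> V -> R) (ax : V -> R)
    (p : V -> V -> R) : Prop :=
  fixed_point delta l ax p /\
  (forall q, fixed_point delta l ax q -> forall u x, q u x <= p u x).

(* Multi-trade of the incoming edges (u,v), u != w, of creditor v to buyer w,
   with fractions beta u and haircut rates alpha u. *)
Definition trade_return (l : V -> V -> R) (v w : V) (alpha beta : V -> R) : R :=
  \sum_(u : V | u != w) alpha u * beta u * l u v.

Definition trade_liab (l : V -> V -> R) (v w : V) (beta : V -> R) : V -> V -> R :=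
  fun u x =>
    if u == w then l u x
    else if x == v then (1 - beta u) * l u v
    else if x == w then l u w + beta u * l u v
    else l u x.

Definition trade_ext (ax : V -> R) (v w : V) (rho : R) : V -> R :=
  fun b => if b == v then ax b + rho
           else if b == w then ax b - rho
           else ax b.

End FinNet.

Definition liabR (R : realType) (V : finType) (l : V -> V -> nat) : V -> V -> R :=
  fun u x => (l u x)%:R.
Definition extR (R : realType) (V : finType) (ax : V -> nat) : V -> R :=
  fun b => (ax b)%:R.

(* Main.v *)
Require Import Defs.
From HB Require Import structures.
From mathcomp Require Import all_boot all_order all_algebra.
From mathcomp Require Import all_classical all_reals.
From mathcomp Require Import lra.
Import Order.TTheory GRing.Theory Num.Theory.
Local Open Scope ring_scope.

Section Gen.
Context {R : realType} {V : finType}.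

Definition Phi (ax : V -> R) (c : V -> V -> R) (L : V -> R) (f : V -> R) (u : V) : R :=
  Num.min (ax u + \sum_y f y * c y u) (L u).

Definition coef (l : V -> V -> R) (y u : V) : R := l y u / total_liab l y.

Lemma assets1 (l : V -> V -> R) (ax : V -> R) (p : V -> V -> R) (u : V) : assets 1 l ax p u = ax u + inflow p u.
Proof. by rewrite /assets; case: ifP; rewrite ?mul1r. Qed.

Lemma Phi_mono (ax : V -> R) c L (f g : V -> R) : (forall y u, 0 <= c y u) -> (forall y, f y <= g y) ->
  forall u, Phi ax c L f u <= Phi ax c L g u.
Proof.
move=> hc hfg u; rewrite /Phi le_min !ge_min lexx !orbT andbT.
apply/orP; left; rewrite lerD2l; apply: ler_sum => y _.
by apply: ler_wpM2r.
Qed.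

Definition mm (l : V -> V -> R) (ax : V -> R) (p : V -> V -> R) (y : V) := Num.min (assets 1 l ax p y) (total_liab l y).

Lemma fp_inflow (l : V -> V -> R) (ax : V -> R) (p : V -> V -> R) : fixed_point 1 l ax p ->
  forall u, inflow p u = \sum_y mm l ax p y * coef l y u.
Proof.
move=> [_ hp] u; rewrite /inflow; apply: eq_bigr => y _.
by rewrite hp /mm /coef mulrA.
Qed.

Lemma coef_ge0 (l : V -> V -> R) : (forall y u, 0 <= l y u) -> forall y u, 0 <= coef l y u.
Proof.
move=> hl y u; rewrite /coef divr_ge0 // /total_liab sumr_ge0 //.
Qed.

Lemma sum_coef (l : V -> V -> R) y : (forall y u, 0 <= l y u) -> total_liab l y != 0 ->
  \sum_u coef l y u = 1.
Proof.
move=> hl hL; rewrite /coef -mulr_suml divff //.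
Qed.


Lemma L_ge0 (l : V -> V -> R) : (forall y u, 0 <= l y u) -> forall y, 0 <= total_liab l y.
Proof. by move=> hl y; rewrite /total_liab sumr_ge0. Qed.

Lemma assets_ge0 (l : V -> V -> R) (ax : V -> R) (p : V -> V -> R) :
  (forall u, 0 <= ax u) -> (forall y u, 0 <= p y u) -> forall u, 0 <= assets 1 l ax p u.
Proof. by move=> hax hp u; rewrite assets1 addr_ge0 // /inflow sumr_ge0. Qed.

Lemma min_ge0L (a L : R) : 0 <= a -> 0 <= L -> 0 <= Num.min a L.
Proof. by move=> ha hL; rewrite le_min ha hL. Qed.

Lemma sum_mul_coef (l : V -> V -> R) (y : V) (g : R) :
  (forall y u, 0 <= l y u) -> total_liab l y != 0 ->
  \sum_u g * coef l y u = g.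
Proof. by move=> hl hL; rewrite -mulr_sumr sum_coef // mulr1. Qed.

Lemma tarski (l : V -> V -> R) (ax : V -> R) (p : V -> V -> R) :
  (forall y u, 0 <= l y u) -> (forall u, 0 <= ax u) -> clearing_state 1 l ax p ->
  forall f : V -> R, (forall u, 0 <= f u) ->
  (forall u, f u <= Phi ax (coef l) (total_liab l) f u) ->
  forall u, f u <= mm l ax p u.
Proof.
move=> hl hax [[hp0 hp] hmax] f0 hf00 hf0.
pose P := fun f : V -> R => (forall u, 0 <= f u) /\
  (forall u, f u <= Phi ax (coef l) (total_liab l) f u).
pose E := fun u => (fun x : R => exists2 f, P f & f u = x) : set R.
pose g u := sup (E u).
have hc := coef_ge0 l hl.
have hL := L_ge0 l hl.
have hPL : forall f u, P f -> f u <= total_liab l u.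
  by move=> f u [_ h]; apply: (le_trans (h u)); rewrite /Phi ge_min lexx orbT.
have hsup : forall u, has_sup (E u).
  move=> u; split; first by exists (f0 u); exists f0.
  by exists (total_liab l u) => x [f Pf <-]; apply: hPL.
have hub : forall f, P f -> forall u, f u <= g u.
  by move=> f Pf u; apply: (sup_upper_bound (hsup u)); exists f.
have hg0 : forall u, 0 <= g u.
  by move=> u; apply: le_trans (hf00 u) (hub f0 (conj hf00 hf0) u).
have hgPhi : forall u, g u <= Phi ax (coef l) (total_liab l) g u.
  move=> u; apply: ge_sup; first by exists (f0 u); exists f0.
  move=> x [f Pf <-]; apply: le_trans (proj2 Pf u) _.
  by apply: Phi_mono => // y; apply: hub.
have hPhi0 : forall u, 0 <= Phi ax (coef l) (total_liab l) g u.
  move=> u; apply: min_ge0L => //; rewrite addr_ge0 // sumr_ge0 // => y _.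
  by rewrite mulr_ge0.
have hPg : P (Phi ax (coef l) (total_liab l) g).
  split=> // u; apply: Phi_mono => //.
have hgeq : forall u, Phi ax (coef l) (total_liab l) g u = g u.
  by move=> u; apply/eqP; rewrite eq_le hgPhi andbT hub.
pose pg := fun y x => g y * l y x / total_liab l y.
have hfp : fixed_point 1 l ax pg.
  split; first by move=> y x; rewrite /pg divr_ge0 // mulr_ge0.
  move=> y x; rewrite /pg; congr (_ * _ / _).
  rewrite -[in LHS]hgeq /Phi assets1 /inflow; congr (Num.min (_ + _) _).
  by apply: eq_bigr => z _; rewrite /pg /coef mulrA.
have hle := hmax _ hfp.
move=> u; apply: le_trans (hub f0 (conj hf00 hf0) u) _.
have ha0 := assets_ge0 l ax p hax hp0.
have [hL0|hLn0] := eqVneq (total_liab l u) 0.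
  have : g u <= 0 by rewrite -hL0; apply: hPL.
  move=> h; apply: le_trans h _; apply: min_ge0L => //.
have -> : g u = \sum_x pg u x.
  by rewrite -{1}(sum_mul_coef l u (g u) hl hLn0); apply: eq_bigr => x _; rewrite /pg /coef mulrA.
have -> : mm l ax p u = \sum_x p u x.
  by rewrite -{1}(sum_mul_coef l u (mm l ax p u) hl hLn0); apply: eq_bigr => x _; rewrite hp /coef mulrA.
by apply: ler_sum => x _; apply: hle.
Qed.


Lemma mm_Phi (l : V -> V -> R) (ax : V -> R) (p : V -> V -> R) :
  fixed_point 1 l ax p -> forall u,
  mm l ax p u = Phi ax (coef l) (total_liab l) (mm l ax p) u.
Proof. by move=> hfp u; rewrite /mm /Phi assets1 (fp_inflow _ _ _ hfp). Qed.

Lemma mm_ge0 (l : V -> V -> R) (ax : V -> R) (p : V -> V -> R) :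
  (forall y u, 0 <= l y u) -> (forall u, 0 <= ax u) -> fixed_point 1 l ax p ->
  forall u, 0 <= mm l ax p u.
Proof.
move=> hl hax [hp0 _] u; apply: min_ge0L; first exact: assets_ge0.
exact: L_ge0.
Qed.

Lemma sum_assets (l : V -> V -> R) (ax : V -> R) (p : V -> V -> R) :
  (forall y u, 0 <= l y u) -> (forall u, 0 <= ax u) -> fixed_point 1 l ax p ->
  \sum_u assets 1 l ax p u = \sum_u ax u + \sum_u mm l ax p u.
Proof.
move=> hl hax hfp.
under eq_bigr => u _ do rewrite assets1 (fp_inflow _ _ _ hfp).
rewrite big_split /=; congr (_ + _).
rewrite exchange_big /=; apply: eq_bigr => y _.
have [hL0|hLn0] := eqVneq (total_liab l y) 0; last exact: sum_mul_coef.
have -> : mm l ax p y = 0.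
  rewrite /mm hL0; apply/eqP; rewrite eq_le ge_min lexx orbT /=.
  apply: min_ge0L => //; apply: assets_ge0 => //; exact: (proj1 hfp).
by rewrite big1 // => u _; rewrite mul0r.
Qed.

Lemma min_lip (a a' L : R) : a <= a' ->
  Num.min a' L - Num.min a L <= a' - a.
Proof.
move=> h; rewrite /Num.min /Order.min.
case: ifP => h1; case: ifP => h2.
- lra.
- move/negbT: h2; rewrite -leNgt => h2; lra.
- move/negbT: h1; rewrite -leNgt => h1; lra.
- move/negbT: h1; move/negbT: h2; rewrite -!leNgt => h2 h1; lra.
Qed.

End Gen.

Lemma sumV_ord (R : realType) (V : finType) (F : V -> R) :
  \sum_(u : V) F u = \sum_(i < #|V|) F (enum_val i).
Proof. rewrite -big_enum_val. by apply: eq_bigl. Qed.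

Lemma kernel_vec (R : realType) (V : finType) (M : V -> V -> R) (v0 : V) :
  (forall y, \sum_u M y u = 1) ->
  exists z : V -> R, (exists u, z u != 0) /\ forall u, z u = \sum_y z y * M y u.
Proof.
move=> hM.
pose n := #|V|.
pose K : 'M[R]_n := \matrix_(i, j) ((i == j)%:R - M (enum_val i) (enum_val j)).
have hK1 : K *m const_mx 1 = 0 :> 'cV_n.
  apply/matrixP => i j; rewrite !mxE.
  under eq_bigr => k _ do rewrite !mxE mulr1.
  rewrite sumrB -sumV_ord hM.
  rewrite (bigD1 i) //= eqxx big1 ?addr0 ?subrr // => k /negPf hk.
  by rewrite eq_sym hk.
have hdet : \det K = 0.
  rewrite -det_tr; apply/eqP/det0P.
  exists (const_mx 1 : 'rV_n).
    apply/eqP => /matrixP /(_ 0 (enum_rank v0)); rewrite !mxE => /eqP.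
    by rewrite oner_eq0.
  by rewrite -[const_mx 1]trmx_const -trmx_mul hK1 trmx0.
have /det0P [z zn0 zK] : \det K == 0 by rewrite hdet.
exists (fun u => z 0 (enum_rank u)); split.
  case: (pickP (fun i => z 0 i != 0)) => [i hi|h].
    by exists (enum_val i); rewrite enum_valK.
  case/eqP: zn0; apply/matrixP => i j; rewrite mxE ord1.
  by move/negbFE/eqP: (h j).
move=> u; have /matrixP /(_ 0 (enum_rank u)) := zK.
rewrite !mxE.
under eq_bigr => k _ do rewrite !mxE mulrBr.
rewrite sumrB (bigD1 (enum_rank u)) //= eqxx mulr1 big1 ?addr0; last first.
  by move=> k /negPf hk; rewrite hk mulr0.
move/eqP; rewrite subr_eq0 => /eqP ->.
rewrite [RHS]sumV_ord; apply: eq_bigr => i _.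
by rewrite enum_valK !enum_rankK.
Qed.

Section Trade.
Context {R : realType} {V : finType}.

Lemma split2 (v w : V) (F : V -> R) : v != w ->
  \sum_u F u = F v + F w + \sum_(i | (i != v) && (i != w)) F i.
Proof.
move=> hvw; rewrite (bigD1 v) //= (bigD1 w) 1?eq_sym //= addrA.
by congr (_ + _); apply: eq_bigl => i; rewrite andbC.
Qed.



Lemma trade_L (l0 : V -> V -> R) (v w : V) (beta : V -> R) : v != w ->
  forall y, total_liab (trade_liab l0 v w beta) y = total_liab l0 y.
Proof.
move=> hvw y; rewrite /total_liab /trade_liab.
case: eqP => [_|/eqP hyw]; first by [].
have hwv : (w == v) = false by apply/negbTE; rewrite eq_sym.
rewrite (split2 _ _ _ hvw) [RHS](split2 _ _ _ hvw).
rewrite eqxx hwv.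
have -> : \sum_(i | (i != v) && (i != w))
   (if i == v then (1 - beta y) * l0 y v
    else if i == w then l0 y w + beta y * l0 y v else l0 y i) =
   \sum_(i | (i != v) && (i != w)) l0 y i.
  by apply: eq_bigr => i /andP [/negPf -> /negPf ->].
rewrite eqxx; lra.
Qed.

Lemma trade_col (l0 : V -> V -> R) (v w : V) (beta : V -> R) y u :
  u != v -> u != w -> trade_liab l0 v w beta y u = l0 y u.
Proof.
by move=> /negPf huv /negPf huw; rewrite /trade_liab huv huw; case: ifP.
Qed.

Lemma trade_ext_eq (ax : V -> R) (v w : V) rho u :
  u != v -> u != w -> trade_ext ax v w rho u = ax u.
Proof. by move=> /negPf huv /negPf huw; rewrite /trade_ext huv huw. Qed.

Lemma trade_ext_sum (ax : V -> R) (v w : V) rho : v != w ->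
  \sum_u trade_ext ax v w rho u = \sum_u ax u.
Proof.
move=> hvw; rewrite /trade_ext.
have hwv : (w == v) = false by apply/negbTE; rewrite eq_sym.
rewrite (split2 _ _ _ hvw) [RHS](split2 _ _ _ hvw).
rewrite eqxx hwv eqxx.
have -> : \sum_(i | (i != v) && (i != w))
   (if i == v then ax i + rho else if i == w then ax i - rho else ax i) =
   \sum_(i | (i != v) && (i != w)) ax i.
  by apply: eq_bigr => i /andP [/negPf -> /negPf ->].
lra.
Qed.

Lemma trade_liab_ge0 (l0 : V -> V -> R) (v w : V) (beta : V -> R) :
  (forall y u, 0 <= l0 y u) -> (forall u, 0 <= beta u <= 1) ->
  forall y u, 0 <= trade_liab l0 v w beta y u.
Proof.
move=> hl hb y u; rewrite /trade_liab.
have := hl y u; have := hl y v; have := hl y w; have /andP [hb0 hb1] := hb y.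
case: ifP => _ //; case: ifP => _ //.
  by move=> _ h _; rewrite mulr_ge0 // subr_ge0.
by case: ifP => _ // h _ _; rewrite addr_ge0 // mulr_ge0.
Qed.

End Trade.

Theorem proposition1 (R : realType) (V : finType)
    (l : V -> V -> nat) (ax : V -> nat) (v w : V) (alpha beta : V -> R)
    (p p' : V -> V -> R) :
  v != w ->
  (forall u, 0 <= alpha u <= 1) ->
  (forall u, 0 <= beta u <= 1) ->
  trade_return (liabR R l) v w alpha beta <= extR R ax w ->
  clearing_state 1 (liabR R l) (extR R ax) p ->
  clearing_state 1 (trade_liab (liabR R l) v w beta)
    (trade_ext (extR R ax) v w (trade_return (liabR R l) v w alpha beta)) p' ->
  ~ (assets 1 (liabR R l) (extR R ax) p v <
       assets 1 (trade_liab (liabR R l) v w beta)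
         (trade_ext (extR R ax) v w (trade_return (liabR R l) v w alpha beta)) p' v
     /\
     assets 1 (liabR R l) (extR R ax) p w <
       assets 1 (trade_liab (liabR R l) v w beta)
         (trade_ext (extR R ax) v w (trade_return (liabR R l) v w alpha beta)) p' w).
Proof.
move=> hvw hal hbe hrho hcs hcs' [hv hw].
move: hv hw hcs hcs' hrho.
set l0 := liabR R l; set ax0 := extR R ax.
set rho := trade_return l0 v w alpha beta.
set l1 := trade_liab l0 v w beta; set ax1 := trade_ext ax0 v w rho.
move=> hv hw hcs hcs' hrho.
have hl0 : forall y u, 0 <= l0 y u by move=> y u; rewrite /l0 /liabR ler0n.
have hax0 : forall u, 0 <= ax0 u by move=> u; rewrite /ax0 /extR ler0n.
have hrho0 : 0 <= rho.
  rewrite /rho /trade_return sumr_ge0 // => u _.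
  have /andP [ha _] := hal u; have /andP [hb _] := hbe u.
  by rewrite !mulr_ge0.
have hl1 : forall y u, 0 <= l1 y u by apply: trade_liab_ge0.
have hax1 : forall u, 0 <= ax1 u.
  move=> u; rewrite /ax1 /trade_ext; case: ifP => _; first by rewrite addr_ge0.
  by case: ifP => [/eqP -> |_ //]; rewrite subr_ge0.
have hL := @trade_L R V l0 v w beta hvw.
have hfp := proj1 hcs; have hfp' := proj1 hcs'.
pose a := assets 1 l0 ax0 p; pose a' := assets 1 l1 ax1 p'.
pose m := mm l0 ax0 p; pose m' := mm l1 ax1 p'.
pose c := coef l0.
have hc : forall y u, 0 <= c y u := coef_ge0 l0 hl0.
have hcc : forall y u, u != v -> u != w -> coef l1 y u = c y u.
  by move=> y u h1 h2; rewrite /coef hL /l1 trade_col.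
have ha : forall u, a u = ax0 u + \sum_y m y * c y u.
  by move=> u; rewrite /a assets1 (fp_inflow _ _ _ hfp).
have ha' : forall u, a' u = ax1 u + \sum_y m' y * coef l1 y u.
  by move=> u; rewrite /a' assets1 (fp_inflow _ _ _ hfp').
have ha0 : forall u, 0 <= a u := assets_ge0 l0 ax0 p hax0 (proj1 hfp).
have hm0 : forall u, 0 <= m u := mm_ge0 l0 ax0 p hl0 hax0 hfp.
have hm0' : forall u, 0 <= m' u := mm_ge0 l1 ax1 p' hl1 hax1 hfp'.
have hmPhi : forall u, m u = Phi ax0 c (total_liab l0) m u := mm_Phi _ _ _ hfp.
have hmPhi' : forall u, m' u = Phi ax1 (coef l1) (total_liab l1) m' u :=
  mm_Phi _ _ _ hfp'.
have hmm' : forall u, m u <= m' u.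
  pose s u := Num.max (m u) (m' u).
  have hsm' : forall u, m' u <= s u by move=> u; rewrite /s le_max lexx orbT.
  have hsm : forall u, m u <= s u by move=> u; rewrite /s le_max lexx.
  have hs0 : forall u, 0 <= s u by move=> u; exact: le_trans (hm0 u) (hsm u).
  have hc1 := coef_ge0 l1 hl1.
  have hsPhi : forall u, s u <= Phi ax1 (coef l1) (total_liab l1) s u.
    move=> u; rewrite {1}/s ge_max; apply/andP; split; last first.
      by rewrite {1}hmPhi'; exact: (Phi_mono _ _ _ _ _ hc1 hsm' u).
    case: (boolP ((u == v) || (u == w))) => huvw.
      apply: (le_trans _ (Phi_mono _ _ _ _ _ hc1 hsm' u)).
      rewrite -hmPhi' /m /m' /mm /l1 hL; apply: le_min2 => //.
      by case/orP: huvw => /eqP ->; apply: ltW.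
    move: huvw; rewrite negb_or => /andP [huv huw].
    rewrite hmPhi /Phi /ax1 trade_ext_eq // /l1 hL.
    apply: le_min2 => //; rewrite lerD2l; apply: ler_sum => y _.
    by rewrite hcc //; apply: ler_wpM2r.
  have := tarski l1 ax1 p' hl1 hax1 hcs' s hs0 hsPhi.
  by move=> h u; exact: le_trans (hsm u) (h u).
have hge : forall u, a u <= a' u.
  move=> u; case: (boolP ((u == v) || (u == w))) => [/orP [/eqP -> | /eqP ->]|].
  - exact: ltW hv.
  - exact: ltW hw.
  rewrite negb_or => /andP [huv huw].
  rewrite ha ha' /ax1 trade_ext_eq // lerD2l; apply: ler_sum => y _.
  by rewrite hcc //; apply: ler_wpM2r.
have hsumA := sum_assets l0 ax0 p hl0 hax0 hfp.
have hsumA' := sum_assets l1 ax1 p' hl1 hax1 hfp'.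
have hsax := @trade_ext_sum R V ax0 v w rho hvw.
have hmin : forall u, m u = Num.min (a u) (total_liab l0 u) by [].
have hmin' : forall u, m' u = Num.min (a' u) (total_liab l0 u).
  by move=> u; rewrite /m' /mm /l1 hL.
have hterm : forall u, 0 <= (a' u - a u) - (m' u - m u).
  by move=> u; rewrite subr_ge0 hmin hmin'; exact: min_lip (hge u).
have hsum0 : \sum_u ((a' u - a u) - (m' u - m u)) = 0.
  rewrite !sumrB.
  have e1 : \sum_u a u = \sum_u ax0 u + \sum_u m u by exact: hsumA.
  have e2 : \sum_u a' u = \sum_u ax0 u + \sum_u m' u.
    by rewrite -hsax; exact: hsumA'.
  rewrite e1 e2; lra.
have hdiff : forall u, a' u - a u = m' u - m u.
  move=> u; apply/eqP; rewrite -subr_eq0; apply/eqP.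
  have := @psumr_eq0P R V predT _ (fun i _ => hterm i) hsum0 u isT.
  by [].
pose S u := a u < a' u.
have hSL : forall u, S u -> a u < total_liab l0 u.
  move=> u hu; rewrite ltNge; apply/negP => hLa.
  have e1 : m u = total_liab l0 u by rewrite hmin; apply/min_idPr.
  have e2 : m' u = total_liab l0 u.
    by rewrite hmin'; apply/min_idPr; exact: le_trans hLa (hge u).
  have := hdiff u; rewrite e1 e2 subrr; move: hu; rewrite /S; lra.
have hSm : forall u, S u -> m u = a u.
  by move=> u hu; rewrite hmin; apply/min_idPl; exact: ltW (hSL u hu).
have hnS : forall u, ~~ S u -> a' u = a u.
  move=> u hu; apply/eqP; rewrite eq_le hge andbT leNgt; exact: hu.
have hnSv : forall u, ~~ S u -> u != v.
  by move=> u; apply: contraNneq => ->; exact: hv.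
have hnSw : forall u, ~~ S u -> u != w.
  by move=> u; apply: contraNneq => ->; exact: hw.
have hclosed : forall y u, S y -> ~~ S u -> c y u = 0.
  move=> y u hy hu.
  have huv := hnSv u hu; have huw := hnSw u hu.
  have h0 : \sum_i (m' i - m i) * c i u = 0.
    have := hnS u hu; rewrite ha ha' /ax1 trade_ext_eq //.
    under eq_bigr => i _ do rewrite hcc //.
    move=> e.
    have -> : \sum_i (m' i - m i) * c i u = \sum_i m' i * c i u - \sum_i m i * c i u.
      by rewrite -sumrB; apply: eq_bigr => i _; rewrite mulrBl.
    lra.
  have hter : forall i, 0 <= (m' i - m i) * c i u.
    by move=> i; rewrite mulr_ge0 // subr_ge0.
  have := @psumr_eq0P R V predT _ (fun i _ => hter i) h0 y isT.
  move/eqP; rewrite mulf_eq0 => /orP [|/eqP //].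
  rewrite -hdiff subr_eq0 => /eqP e; move: hy; rewrite /S e ltxx //.
have hLpos : forall y, S y -> total_liab l0 y != 0.
  by move=> y hy; rewrite gt_eqF // (le_lt_trans (ha0 y) (hSL y hy)).
pose Mt y u : R := if S y then c y u else (u == v)%:R.
have hMt : forall y, \sum_u Mt y u = 1.
  move=> y; rewrite /Mt; case hy : (S y).
    exact: sum_coef l0 y hl0 (hLpos y hy).
  by rewrite (bigD1 v) //= eqxx big1 ?addr0 // => u /negPf ->.
have hMt0 : forall y u, 0 <= Mt y u.
  by move=> y u; rewrite /Mt; case: ifP => _ //; rewrite ler0n.
have [z [[u0 hu0] hz]] := kernel_vec R V Mt v hMt.
have hz0 : forall u, ~~ S u -> z u = 0.
  move=> u hu; rewrite hz big1 // => y _; rewrite /Mt; case: ifP => hy.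
    by rewrite hclosed ?mulr0.
  by rewrite (negPf (hnSv u hu)) mulr0.
pose x u := `|z u|.
have hx : forall u, S u -> x u <= \sum_y x y * c y u.
  move=> u hu; rewrite /x {1}hz; apply: le_trans (ler_norm_sum _ _ _) _.
  apply: ler_sum => y _; rewrite normrM (ger0_norm (hMt0 y u)) /Mt.
  case: ifP => hy //.
  by rewrite (hz0 y (negbT hy)) normr0 !mul0r.
pose T := \sum_(u | S u) x u / (total_liab l0 u - a u).
have hT0 : 0 <= T.
  rewrite /T sumr_ge0 // => u hu; rewrite divr_ge0 ?normr_ge0 // subr_ge0.
  exact: ltW (hSL u hu).
pose eps := (1 + T)^-1.
have heps : 0 < eps by rewrite /eps invr_gt0; lra.
pose q u := m u + eps * x u.
have hq0 : forall u, 0 <= q u.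
  by move=> u; rewrite /q addr_ge0 // mulr_ge0 ?normr_ge0 // (ltW heps).
have hmq : forall u, m u <= q u.
  by move=> u; rewrite /q lerDl mulr_ge0 ?normr_ge0 // (ltW heps).
have hqPhi : forall u, q u <= Phi ax0 c (total_liab l0) q u.
  move=> u; case: (boolP (S u)) => hu; last first.
    rewrite {1}/q /x hz0 // normr0 mulr0 addr0 hmPhi.
    exact: (Phi_mono _ _ _ _ _ hc hmq u).
  rewrite /Phi le_min; apply/andP; split.
    rewrite {1}/q hSm // ha.
    have -> : \sum_y q y * c y u = \sum_y m y * c y u + eps * \sum_y x y * c y u.
      rewrite mulr_sumr -big_split /=; apply: eq_bigr => y _.
      by rewrite /q mulrDl -mulrA.
    by rewrite -addrA !lerD2l ler_pM2l // hx.
  rewrite {1}/q hSm //.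
  have hd : 0 < total_liab l0 u - a u by rewrite subr_gt0; exact: hSL.
  have htT : x u / (total_liab l0 u - a u) <= T.
    rewrite /T (bigD1 u) //= lerDl sumr_ge0 // => i /andP [hi _].
    rewrite divr_ge0 ?normr_ge0 // subr_ge0; exact: ltW (hSL i hi).
  have : eps * x u <= total_liab l0 u - a u.
    move: htT hd; set d := total_liab l0 u - a u; set t := x u / d => htT hd.
    have ex : x u = t * d by rewrite /t divfK // lt0r_neq0.
    have h1T : 0 < 1 + T by lra.
    rewrite ex /eps mulrC ler_pdivrMr // [d * _]mulrC.
    apply: ler_wpM2r; [exact: ltW | lra].
  lra.
have hqm := tarski l0 ax0 p hl0 hax0 hcs q hq0 hqPhi u0.
have : 0 < eps * x u0 by rewrite mulr_gt0 // normr_gt0.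
move: hqm; rewrite /q /m; lra.
Qed.
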